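(* Let $f\colon U\otimes V\rightarrow W$ be a multiplication and let $\alpha=(a\ b\ c)$ be a dimension vector for $f$. Then the representation variety $R(f,\alpha)$ has exactly one left general irreducible component.
   Context: Fix a ground field $k$. A multiplication is a linear map $f\colon U\otimes V\rightarrow W$ of finite dimensional $k$-vector spaces. A representation $R$ of $f$ consists of finite dimensional vector spaces $R(0),R(1),R(2)$ and linear maps $R(\phi_{01})\colon R(0)\otimes U\rightarrow R(1)$, $R(\phi_{12})\colon R(1)\otimes V\rightarrow R(2)$, $R(\phi_{02})\colon R(0)\otimes W\rightarrow R(2)$ with $R(\phi_{12})\circ(R(\phi_{01})\otimes I_V)=R(\phi_{02})\circ(I_{R(0)}\otimes f)$ as maps $R(0)\otimes U\otimes V\rightarrow R(2)$. Its dimension vector is $(\dim R(0)\ \dim R(1)\ \dim R(2))$. For $\alpha=(a\ b\ c)$, $R(f,\alpha)$ is the closed subvariety of $\mathrm{Hom}(k^a\otimes U,k^b)\times\mathrm{Hom}(k^b\otimes V,k^c)\times\mathrm{Hom}(k^a\otimes W,k^c)$ of triples satisfying this relation. A representation of the vector space $U$ of dimension vector $(a\ b)$ is a linear map $k^a\otimes U\rightarrow k^b$; these form the vector space $R(U,(a\ b))=\mathrm{Hom}(k^a\otimes U,k^b)$. There is a restriction morphism $R(f,\alpha)\rightarrow R(U,(a\ b))$, $(\phi_{01},\phi_{12},\phi_{02})\mapsto\phi_{01}$. An irreducible component $C$ of $R(f,\alpha)$ is called left general if the restriction of this morphism to $C$ is dominant. *)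

(* Defs.v *)
From HB Require Import structures.
From mathcomp Require Import all_boot all_algebra.
Set Implicit Arguments. Unset Strict Implicit. Unset Printing Implicit Defensive.
Import GRing.Theory.
Local Open Scope ring_scope.

Section Zariski.
Variable k : fieldType.
Variable I : finType.

Inductive polyfun : ((I -> k) -> k) -> Prop :=
  | polyfun_cst (c : k) : polyfun (fun _ => c)
  | polyfun_coord (i : I) : polyfun (fun x => x i)
  | polyfun_add p q : polyfun p -> polyfun q -> polyfun (fun x => p x + q x)
  | polyfun_mul p q : polyfun p -> polyfun q -> polyfun (fun x => p x * q x).

Definition subsetP (A B : (I -> k) -> Prop) := forall x, A x -> B x.

Definition zariski_closed (Z : (I -> k) -> Prop) : Prop :=
  exists S : ((I -> k) -> k) -> Prop,
    (forall p, S p -> polyfun p) /\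
    (forall x, Z x <-> (forall p, S p -> p x = 0)).

Definition irreducible (Y : (I -> k) -> Prop) : Prop :=
  (exists x, Y x) /\
  forall Z1 Z2, zariski_closed Z1 -> zariski_closed Z2 ->
    subsetP Y (fun x => Z1 x \/ Z2 x) -> subsetP Y Z1 \/ subsetP Y Z2.

Definition irreducible_component (X C : (I -> k) -> Prop) : Prop :=
  subsetP C X /\ irreducible C /\
  forall D, irreducible D -> subsetP C D -> subsetP D X -> subsetP D C.

Definition dense (A : (I -> k) -> Prop) : Prop :=
  forall Z, zariski_closed Z -> subsetP A Z -> forall x, Z x.

End Zariski.

(* Bases of U, V, W are fixed: dim U = u, dim V = v, dim W = w, and the
   multiplication f : U (x) V -> W is given by its structure constants
   f i j l = coefficient of e_l in f(e_i (x) e_j). *)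
Definition multiplication (k : fieldType) (u v w : nat) := 'I_u -> 'I_v -> 'I_w -> k.

(* Coordinates of the ambient space
   Hom(k^a (x) U, k^b) x Hom(k^b (x) V, k^c) x Hom(k^a (x) W, k^c):
   phi01 has entries indexed by (p, i, q) : 'I_a * 'I_u * 'I_b, meaning
   the e_q-coordinate of phi01(e_p (x) e_i); similarly for phi12, phi02. *)
Definition rep_index (u v w a b c : nat) : finType :=
  (('I_a * 'I_u * 'I_b) + ('I_b * 'I_v * 'I_c) + ('I_a * 'I_w * 'I_c))%type.

(* R(U, (a b)) = Hom(k^a (x) U, k^b) *)
Definition repU_index (u a b : nat) : finType := ('I_a * 'I_u * 'I_b)%type.

Section Reps.
Variables (k : fieldType) (u v w a b c : nat).
Implicit Type x : rep_index u v w a b c -> k.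

Definition phi01 x (p : 'I_a) (i : 'I_u) (q : 'I_b) : k := x (inl (inl (p, i, q))).
Definition phi12 x (q : 'I_b) (j : 'I_v) (r : 'I_c) : k := x (inl (inr (q, j, r))).
Definition phi02 x (p : 'I_a) (l : 'I_w) (r : 'I_c) : k := x (inr (p, l, r)).

(* R(f, alpha): phi12 o (phi01 (x) I_V) = phi02 o (I_{k^a} (x) f),
   checked on basis vectors e_p (x) e_i (x) e_j and the r-th coordinate. *)
Definition rep_variety (f : multiplication k u v w) : (rep_index u v w a b c -> k) -> Prop :=
  fun x => forall (p : 'I_a) (i : 'I_u) (j : 'I_v) (r : 'I_c),
    \sum_(q < b) phi01 x p i q * phi12 x q j r =
    \sum_(l < w) f i j l * phi02 x p l r.

Definition restrictU x : repU_index u a b -> k :=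
  fun t => phi01 x t.1.1 t.1.2 t.2.

Definition left_general (C : (rep_index u v w a b c -> k) -> Prop) : Prop :=
  dense (fun y : repU_index u a b -> k => exists x, C x /\ y = restrictU x).

End Reps.

(* Main.v *)
Require Import Defs.
From mathcomp Require Import all_boot all_algebra all_fingroup zify.
From Stdlib Require Import FunctionalExtensionality Classical.
Set Implicit Arguments. Unset Strict Implicit. Unset Printing Implicit Defensive.
Import GRing.Theory.
Local Open Scope ring_scope.


Section PolyFun.
Variables (k : fieldType) (I : finType).
Local Notation pf := (@polyfun k I).

Lemma pf_ext p q : pf p -> (forall x, p x = q x) -> pf q.
Proof. by move=> Hp E; have -> : q = p by apply: functional_extensionality => x; rewrite E. Qed.

Lemma pf_opp p : pf p -> pf (fun x => - p x).
Proof. move=> Hp; apply: (pf_ext (polyfun_mul (polyfun_cst _ (-1)) Hp)) => x; by rewrite mulN1r. Qed.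

Lemma pf_sub p q : pf p -> pf q -> pf (fun x => p x - q x).
Proof. by move=> Hp Hq; apply: polyfun_add => //; apply: pf_opp. Qed.

Lemma pf_sum (T : Type) (r : seq T) (P : pred T) (F : T -> (I -> k) -> k) :
  (forall i, P i -> pf (F i)) -> pf (fun x => \sum_(i <- r | P i) F i x).
Proof.
move=> HF; elim: r => [|i r IH].
  by apply: (pf_ext (polyfun_cst _ 0)) => x; rewrite big_nil.
case Pi: (P i).
  by apply: (pf_ext (polyfun_add (HF i Pi) IH)) => x; rewrite big_cons Pi.
by apply: (pf_ext IH) => x; rewrite big_cons Pi.
Qed.

Lemma pf_prod (T : Type) (r : seq T) (P : pred T) (F : T -> (I -> k) -> k) :
  (forall i, P i -> pf (F i)) -> pf (fun x => \prod_(i <- r | P i) F i x).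
Proof.
move=> HF; elim: r => [|i r IH].
  by apply: (pf_ext (polyfun_cst _ 1)) => x; rewrite big_nil.
case Pi: (P i).
  by apply: (pf_ext (polyfun_mul (HF i Pi) IH)) => x; rewrite big_cons Pi.
by apply: (pf_ext IH) => x; rewrite big_cons Pi.
Qed.

Lemma pf_comp (J : finType) (G : (J -> k) -> (I -> k)) :
  (forall i, @polyfun k J (fun z => G z i)) -> forall p, pf p -> @polyfun k J (fun z => p (G z)).
Proof.
move=> HG p; elim => [c|i|p1 q1 _ H1 _ H2|p1 q1 _ H1 _ H2].
- exact: polyfun_cst.
- exact: HG.
- exact: polyfun_add.
- exact: polyfun_mul.
Qed.

Definition pmx m n (A : (I -> k) -> 'M[k]_(m, n)) := forall i j, pf (fun x => A x i j).

Lemma pmx_cst m n (B : 'M[k]_(m, n)) : pmx (fun _ => B).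
Proof. move=> i j; exact: polyfun_cst. Qed.

Lemma pmx_mul m n p (A : (I -> k) -> 'M[k]_(m, n)) (B : (I -> k) -> 'M[k]_(n, p)) :
  pmx A -> pmx B -> pmx (fun x => A x *m B x).
Proof.
move=> HA HB i j; apply: (@pf_ext (fun x => \sum_(l < n) A x i l * B x l j)).
  by apply: pf_sum => l _; exact: polyfun_mul.
by move=> x; rewrite mxE.
Qed.

Lemma pmx_add m n (A B : (I -> k) -> 'M[k]_(m, n)) :
  pmx A -> pmx B -> pmx (fun x => A x + B x).
Proof. by move=> HA HB i j; apply: (pf_ext (polyfun_add (HA i j) (HB i j))) => x; rewrite mxE. Qed.

Lemma pmx_opp m n (A : (I -> k) -> 'M[k]_(m, n)) :
  pmx A -> pmx (fun x => - A x).
Proof. by move=> HA i j; apply: (pf_ext (pf_opp (HA i j))) => x; rewrite mxE. Qed.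

Lemma pmx_scale m n (s : (I -> k) -> k) (A : (I -> k) -> 'M[k]_(m, n)) :
  pf s -> pmx A -> pmx (fun x => s x *: A x).
Proof. by move=> Hs HA i j; apply: (pf_ext (polyfun_mul Hs (HA i j))) => x; rewrite mxE. Qed.

Lemma pf_det n (A : (I -> k) -> 'M[k]_n) : pmx A -> pf (fun x => \det (A x)).
Proof.
move=> HA; apply: (@pf_ext (fun x => \sum_(s : 'S_n) (-1) ^+ s * \prod_i A x i (s i))) => //.
apply: pf_sum => s _; apply: polyfun_mul; first exact: polyfun_cst.
by apply: pf_prod => i _; apply: HA.
Qed.

Lemma pmx_adj n (A : (I -> k) -> 'M[k]_n) : pmx A -> pmx (fun x => \adj (A x)).
Proof.
move=> HA i j; apply: (pf_ext (polyfun_mul (polyfun_cst _ ((-1) ^+ (j + i)))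
   (pf_det (A := fun x => row' j (col' i (A x))) _))) => [i' j'|x].
  by apply: (pf_ext (HA _ _)) => x; rewrite !mxE.
by rewrite mxE /cofactor.
Qed.

End PolyFun.



Section Line.
Variables (k : closedFieldType) (I : finType).
Local Notation pf := (@polyfun k I).

Lemma pf_line p (z1 z2 : I -> k) : pf p ->
  exists P : {poly k}, forall s, p (fun i => z1 i + s * (z2 i - z1 i)) = P.[s].
Proof.
elim => [c|i|p1 q1 _ [P1 H1] _ [Q1 H2]|p1 q1 _ [P1 H1] _ [Q1 H2]].
- by exists c%:P => s; rewrite hornerC.
- exists ((z1 i)%:P + 'X * (z2 i - z1 i)%:P) => s.
  by rewrite hornerD hornerC hornerM hornerX hornerC.
- by exists (P1 + Q1) => s; rewrite hornerD H1 H2.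
- by exists (P1 * Q1) => s; rewrite hornerM H1 H2.
Qed.

Lemma pf_prod2 p q (z1 z2 : I -> k) : pf p -> pf q -> p z1 != 0 -> q z2 != 0 ->
  exists z, p z != 0 /\ q z != 0.
Proof.
move=> Hp Hq n1 n2.
have [P HP] := pf_line z1 z2 Hp; have [Q HQ] := pf_line z1 z2 Hq.
have e0 : (fun i => z1 i + 0 * (z2 i - z1 i)) = z1.
  by apply: functional_extensionality => i; rewrite mul0r addr0.
have e1 : (fun i => z1 i + 1 * (z2 i - z1 i)) = z2.
  by apply: functional_extensionality => i; rewrite mul1r addrC subrK.
have P0 : P != 0.
  by apply: contraNneq n1 => P0; rewrite -e0 HP P0 horner0.
have Q0 : Q != 0.
  by apply: contraNneq n2 => Q0; rewrite -e1 HQ Q0 horner0.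
have /closed_nonrootP [s Hs] : P * Q != 0 by rewrite mulf_neq0.
exists (fun i => z1 i + s * (z2 i - z1 i)); rewrite HP HQ.
by move: Hs; rewrite /root hornerM mulf_eq0 negb_or => /andP.
Qed.

End Line.



Lemma key_mx (k : fieldType) m N r (A : 'M[k]_(m, N)) (P : 'M_(r, m)) (Q : 'M_(N, r)) :
  (\rank A <= r)%N -> \det (P *m A *m Q) != 0 ->
  A *m Q *m \adj (P *m A *m Q) *m P *m A = \det (P *m A *m Q) *: A.
Proof.
move=> hr hd.
have hu : P *m A *m Q \in unitmx by rewrite unitmxE unitfE.
have r1 := mxrank_unit hu.
have r2 : (r <= \rank (P *m A))%N by rewrite -{1}r1 mxrankM_maxl.
have [hle heq] := mxrank_leqif_sup (submxMl P A).
have : (A <= P *m A)%MS by rewrite -heq eqn_leq hle (leq_trans hr r2).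
case/submxP => X hX.
rewrite {1}hX.
have -> : X *m (P *m A) *m Q = X *m (P *m A *m Q) by rewrite !mulmxA.
rewrite -(mulmxA X) mul_mx_adj mul_mx_scalar -!scalemxAl.
by congr (_ *: _); rewrite -mulmxA -hX.
Qed.




Lemma sum_triple (k : fieldType) (A B C : finType) (F : A * B * C -> k) :
  \sum_s F s = \sum_x \sum_y \sum_z F (x, y, z).
Proof.
rewrite pair_bigA /= pair_bigA /=.
by apply: eq_bigr => [[[x y] z]] _.
Qed.

Section Main.
Variables (k : closedFieldType) (u v w : nat) (f : multiplication k u v w) (a b c : nat).

Local Notation T := (rep_index u v w a b c).
Local Notation RU := (repU_index u a b).
Definition Et : finType := ('I_a * 'I_u * 'I_v * 'I_c)%type.
Definition Yt : finType := (('I_b * 'I_v * 'I_c) + ('I_a * 'I_w * 'I_c))%type.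
Local Notation m := #|Et|.
Local Notation N := #|Yt|.

Definition Lentry (phi : RU -> k) (e : Et) (y : Yt) : k :=
  match y with
  | inl s => if (s.1.2 == e.1.2) && (s.2 == e.2) then phi (e.1.1.1, e.1.1.2, s.1.1) else 0
  | inr s => if (s.1.1 == e.1.1.1) && (s.2 == e.2) then - f e.1.1.2 e.1.2 s.1.2 else 0
  end.

Definition Lmx (phi : RU -> k) : 'M[k]_(m, N) := \matrix_(e, y) Lentry phi (enum_val e) (enum_val y).

Definition embed (y : Yt) : T := match y with inl s => inl (inr s) | inr s => inr s end.

Definition yv (x : T -> k) : 'cV[k]_N := \col_i x (embed (enum_val i)).

Lemma Lmx_eq x p i j r :
  (Lmx (restrictU x) *m yv x) (enum_rank ((p, i, j, r) : Et)) 0 =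
  \sum_q phi01 x p i q * phi12 x q j r - \sum_l f i j l * phi02 x p l r.
Proof.
rewrite mxE.
transitivity (\sum_(y : Yt) Lentry (restrictU x) (p, i, j, r) y * x (embed y)).
  rewrite [RHS](reindex (@enum_val Yt (fun _ => true))) /=; last by apply: onW_bij; exact: enum_val_bij.
  by apply: eq_bigr => t _; rewrite !mxE enum_rankK.
rewrite big_sumType /= !sum_triple /=.
congr (_ + _).
  apply: eq_bigr => q _.
  rewrite (bigD1 j) //= [X in _ + X]big1 ?addr0 => [|j' nj]; last first.
    by apply: big1 => r' _; rewrite (negbTE nj) mul0r.
  rewrite (bigD1 r) //= [X in _ + X]big1 ?addr0 => [|r' nr]; last by rewrite eqxx (negbTE nr) andbF mul0r.
  by rewrite !eqxx.
rewrite -sumrN (bigD1 p) //= [X in _ + X]big1 ?addr0 => [|p' np]; last first.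
  by apply: big1 => l _; apply: big1 => r' _; rewrite (negbTE np) mul0r.
apply: eq_bigr => l _.
rewrite (bigD1 r) //= [X in _ + X]big1 ?addr0 => [|r' nr]; last by rewrite eqxx (negbTE nr) andbF mul0r.
by rewrite !eqxx mulNr.
Qed.


Lemma Xv_iff x : rep_variety f x <-> Lmx (restrictU x) *m yv x = 0.
Proof.
split => H.
  apply/matrixP => e z; rewrite (ord1 z) [RHS]mxE -[e]enum_valK.
  case E: (enum_val e) => [[[p i] j] r].
  by rewrite Lmx_eq H subrr.
move=> p i j r; apply/eqP; rewrite -subr_eq0 -(Lmx_eq x p i j r) H mxE //.
Qed.

Lemma pmx_Lmx (I : finType) (G : (I -> k) -> RU -> k) :
  (forall s, polyfun (fun z => G z s)) -> pmx (fun z => Lmx (G z)).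
Proof.
move=> HG e y; apply: (@pf_ext _ _ (fun z => Lentry (G z) (enum_val e) (enum_val y))); last first.
  by move=> z; rewrite mxE.
rewrite /Lentry; case: (enum_val y) => s /=; [case: ((s.1.2 == _) && _) | case: ((s.1.1 == _) && _)]; try exact: polyfun_cst.
exact: HG.
Qed.

Lemma pmx_yv : pmx (fun x : T -> k => yv x).
Proof.
move=> i j; apply: (@pf_ext _ _ (fun x => x (embed (enum_val i)))); last by move=> x; rewrite mxE.
exact: polyfun_coord.
Qed.

Section Param.
Variables (r0 : nat) (P : 'M[k]_(r0, m)) (Q : 'M[k]_(N, r0)) (phi0 : RU -> k).
Hypothesis hmax : forall phi, (\rank (Lmx phi) <= r0)%N.
Hypothesis h0 : \det (P *m Lmx phi0 *m Q) != 0.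

Definition Mm phi := P *m Lmx phi *m Q.
Definition gg phi := \det (Mm phi).
Definition yz phi (t : 'cV[k]_N) : 'cV[k]_N :=
  gg phi *: t - Q *m (\adj (Mm phi) *m (P *m (Lmx phi *m t))).

Lemma yz_ker phi t : gg phi != 0 -> Lmx phi *m yz phi t = 0.
Proof.
move=> hg; rewrite /yz mulmxBr -scalemxAr !mulmxA.
by rewrite /gg /Mm in hg *; rewrite key_mx // -scalemxAl subrr.
Qed.

Lemma yz_inv phi y : Lmx phi *m y = 0 -> gg phi != 0 -> yz phi ((gg phi)^-1 *: y) = y.
Proof.
move=> hy hg; rewrite /yz scalerA mulfV // scale1r -!scalemxAr hy !mulmx0 scaler0.
by rewrite subr0.
Qed.

Definition J : finType := (RU + Yt)%type.
Definition phz (z : J -> k) : RU -> k := fun s => z (inl s).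
Definition tv (z : J -> k) : 'cV[k]_N := \col_i z (inr (enum_val i)).
Definition Phi (z : J -> k) : T -> k := fun t =>
  match t with
  | inl (inl s) => z (inl s)
  | inl (inr s) => yz (phz z) (tv z) (enum_rank (inl s : Yt)) 0
  | inr s => yz (phz z) (tv z) (enum_rank (inr s : Yt)) 0
  end.

Lemma Phi_restr z : restrictU (Phi z) = phz z.
Proof. by apply: functional_extensionality => [[[p i] q]]. Qed.

Lemma Phi_yv z : yv (Phi z) = yz (phz z) (tv z).
Proof.
apply/matrixP => i j; rewrite (ord1 j) mxE.
by case E: (enum_val i) => [s|s] /=; rewrite -E enum_valK.
Qed.

Lemma pf_gg (I : finType) (G : (I -> k) -> RU -> k) :
  (forall s, polyfun (fun z => G z s)) -> polyfun (fun z => gg (G z)).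
Proof.
move=> HG; apply: pf_det; apply: pmx_mul; last exact: pmx_cst.
by apply: pmx_mul; [exact: pmx_cst | exact: pmx_Lmx].
Qed.

Lemma pf_Phi t : polyfun (fun z => Phi z t).
Proof.
have Hph : forall s, polyfun (fun z : J -> k => phz z s) by move=> s; exact: polyfun_coord.
have Htv : pmx (fun z : J -> k => tv z).
  move=> i j; apply: (@pf_ext _ _ (fun z => z (inr (enum_val i)))); last by move=> z; rewrite mxE.
  exact: polyfun_coord.
have Hy : pmx (fun z => yz (phz z) (tv z)).
  apply: pmx_add; first by apply: pmx_scale => //; exact: pf_gg.
  apply: pmx_opp; apply: pmx_mul; first exact: pmx_cst.
  apply: pmx_mul.
    apply: pmx_adj; apply: pmx_mul; last exact: pmx_cst.
    by apply: pmx_mul; [exact: pmx_cst | exact: pmx_Lmx].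
  apply: pmx_mul; first exact: pmx_cst.
  by apply: pmx_mul => //; exact: pmx_Lmx.
by case: t => [[s|s]|s]; [exact: polyfun_coord | exact: Hy | exact: Hy].
Qed.


Lemma not_subset (I : finType) (A B : (I -> k) -> Prop) :
  ~ Defs.subsetP A B -> exists x, A x /\ ~ B x.
Proof.
move=> H; apply: NNPP => H2; apply: H => x Ax; apply: NNPP => Bx.
by apply: H2; exists x.
Qed.

Lemma not_closed (I : finType) (Z : (I -> k) -> Prop) x :
  zariski_closed Z -> ~ Z x -> exists p, polyfun p /\ p x != 0 /\ (forall y, Z y -> p y = 0).
Proof.
case=> S [HS HZ] nZ.
apply: NNPP => H; apply: nZ; apply/HZ => p Sp.
case: (eqVneq (p x) 0) => // hp; exfalso; apply: H; exists p; split; first exact: HS.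
by split => // y /HZ; apply.
Qed.

Definition Xv := @rep_variety k u v w a b c f.
Definition Yset z := gg (phz z) != 0.
Definition Im x := exists z, Yset z /\ x = Phi z.
Definition Cl x := forall p, @polyfun k T p -> (forall y, Im y -> p y = 0) -> p x = 0.

Lemma Im_Xv x : Im x -> Xv x.
Proof. by case=> z [hz ->]; apply/Xv_iff; rewrite Phi_restr Phi_yv yz_ker. Qed.

Lemma pf_restr s : @polyfun k T (fun x => restrictU x s).
Proof. by case: s => [[p i] q]; exact: (polyfun_coord _ (inl (inl (p, i, q)))). Qed.

Lemma Xv_closed : zariski_closed Xv.
Proof.
exists (fun q => exists e, q = fun x => (Lmx (restrictU x) *m yv x) e 0); split.
  move=> q [e ->]; apply: pmx_mul; [exact: pmx_Lmx pf_restr | exact: pmx_yv].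
move=> x; rewrite /Xv Xv_iff; split.
  by move=> H q [e ->]; rewrite H mxE.
move=> H; apply/matrixP => e j; rewrite (ord1 j) [RHS]mxE; apply: (H (fun x => (Lmx (restrictU x) *m yv x) e 0)); by exists e.
Qed.

Lemma closure_min Z : zariski_closed Z -> Defs.subsetP Im Z -> Defs.subsetP Cl Z.
Proof.
case=> S [HS HZ] hsub x Clx; apply/HZ => p Sp; apply: Clx; first exact: HS.
by move=> y /hsub /HZ; apply.
Qed.

Lemma Im_Cl : Defs.subsetP Im Cl.
Proof. by move=> x Ix p _ H; apply: H. Qed.

Lemma Cl_Xv : Defs.subsetP Cl Xv.
Proof. by apply: closure_min; [exact: Xv_closed | exact: Im_Xv]. Qed.

Lemma Cl_closed : zariski_closed Cl.
Proof.
exists (fun p => @polyfun k T p /\ forall y, Im y -> p y = 0); split; first by move=> p [].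
move=> x; split; first by move=> H p [Hp Hv]; apply: H.
by move=> H p Hp Hv; apply: H.
Qed.

Definition z0 : J -> k := fun j => match j with inl s => phi0 s | inr _ => 0 end.

Lemma pf_phz s : @polyfun k J (fun z => phz z s).
Proof. exact: polyfun_coord. Qed.

Lemma Cl_irr : irreducible Cl.
Proof.
split; first by exists (Phi z0); apply: Im_Cl; exists z0.
move=> Z1 Z2 c1 c2 hsub; apply: NNPP => H.
have n1 : ~ Defs.subsetP Cl Z1 by move=> H1; apply: H; left.
have n2 : ~ Defs.subsetP Cl Z2 by move=> H2; apply: H; right.
have [x1 [[z1 [hz1 ->]] nx1]] : exists x, Im x /\ ~ Z1 x.
  by apply: not_subset => H1; apply: n1; apply: closure_min.
have [x2 [[z2 [hz2 ->]] nx2]] : exists x, Im x /\ ~ Z2 x.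
  by apply: not_subset => H2; apply: n2; apply: closure_min.
have [p1 [Hp1 [np1 Zp1]]] := not_closed c1 nx1.
have [p2 [Hp2 [np2 Zp2]]] := not_closed c2 nx2.
have [z [hz1' hz2']] := pf_prod2 (p := fun z => gg (phz z) * p1 (Phi z)) (q := fun z => p2 (Phi z))
  (polyfun_mul (pf_gg pf_phz) (pf_comp pf_Phi Hp1)) (pf_comp pf_Phi Hp2)
  (mulf_neq0 hz1 np1) np2.
have : Cl (Phi z) by apply: Im_Cl; exists z; split => //; move: hz1'; rewrite mulf_eq0 negb_or => /andP[].
move=> /hsub [/Zp1 e1 | /Zp2 e2].
  by move: hz1'; rewrite e1 mulr0 eqxx.
by move: hz2'; rewrite e2 eqxx.
Qed.

Lemma Kl D : irreducible D -> Defs.subsetP D Xv -> left_general D -> Defs.subsetP D Cl.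
Proof.
move=> [_ irrD] DX lg.
pose Z2 := fun x : T -> k => gg (restrictU x) = 0.
have c2 : zariski_closed Z2.
  exists (fun q => q = fun x => gg (restrictU x)); split; first by move=> q ->; exact: pf_gg pf_restr.
  by move=> x; split; [move=> H q -> | move=> H; exact: (H _ erefl)].
have cover : Defs.subsetP D (fun x => Cl x \/ Z2 x).
  move=> x Dx; case: (eqVneq (gg (restrictU x)) 0) => hg; [by right | left].
  apply: Im_Cl.
  pose z : J -> k := fun j => match j with
    | inl s => x (inl (inl s)) | inr y => (gg (restrictU x))^-1 * x (embed y) end.
  have hphz : phz z = restrictU x by apply: functional_extensionality => [[[p i] q]].
  have Ey : yz (phz z) (tv z) = yv x.
    have -> : tv z = (gg (restrictU x))^-1 *: yv x by apply/matrixP => i j; rewrite !mxE.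
    by rewrite hphz yz_inv // -Xv_iff; apply: DX.
  exists z; split; first by rewrite /Yset hphz.
  apply: functional_extensionality => t.
  by case: t => [[s|s]|s] //=; rewrite Ey mxE enum_rankK.
case: (irrD _ _ Cl_closed c2 cover) => // HZ.
exfalso; move: h0; apply/negP; rewrite negbK.
have cZ : zariski_closed (fun phi : RU -> k => gg phi = 0).
  exists (fun q => q = gg); split; first by move=> q ->; apply: (pf_gg (G := id)) => s; exact: polyfun_coord.
  by move=> phi; split; [move=> H q -> | move=> H; exact: (H _ erefl)].
apply/eqP; apply: (lg _ cZ) => y [x [Dx ->]]; exact: HZ.
Qed.

Lemma Cl_lg : left_general Cl.
Proof.
move=> Z [S [HS HZ]] hsub phi; apply/HZ => p Sp.
case: (eqVneq (p phi) 0) => // hp; exfalso.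
have pg : polyfun gg by apply: (pf_gg (G := id)) => s; exact: polyfun_coord.
have [psi [h1 h2]] := pf_prod2 pg (HS p Sp) h0 hp.
pose zp : J -> k := fun j => match j with inl s => psi s | inr _ => 0 end.
have : Z psi.
  apply: hsub; exists (Phi zp); split; last by rewrite Phi_restr.
  by apply: Im_Cl; exists zp.
by move/HZ => /(_ p Sp) e; move: h2; rewrite e eqxx.
Qed.

Lemma main_param :
  exists C : (T -> k) -> Prop,
    irreducible_component Xv C /\ left_general C /\
    forall C' : (T -> k) -> Prop,
      irreducible_component Xv C' -> left_general C' ->
      forall x, C' x <-> C x.
Proof.
have lgmono : forall D, Defs.subsetP Cl D -> left_general D.
  move=> D hD Z cZ hsub; apply: Cl_lg cZ _ => y [x [Clx ->]].
  by apply: hsub; exists x; split => //; apply: hD.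
exists Cl; split.
  split; first exact: Cl_Xv.
  split; first exact: Cl_irr.
  move=> D irrD hCD hDX; apply: Kl => //; exact: lgmono.
split; first exact: Cl_lg.
move=> C' [hX [irr' max']] lg' x.
have sub1 : Defs.subsetP C' Cl by apply: Kl.
have sub2 : Defs.subsetP Cl C' by apply: max' => //; [exact: Cl_irr | exact: Cl_Xv].
by split; [apply: sub1 | apply: sub2].
Qed.

End Param.

Lemma ex_max_rank : exists phi0 : RU -> k, forall phi, (\rank (Lmx phi) <= \rank (Lmx phi0))%N.
Proof.
pose h := fun phi : RU -> k => \rank (Lmx phi).
have hB : forall phi, (h phi <= m)%N by move=> phi; exact: rank_leq_row.
suff H : forall n (x : RU -> k), (m - h x <= n)%N -> exists y, forall x', (h x' <= h y)%N.
  exact: (H m (fun _ => 0) (leq_subr _ _)).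
elim=> [|n IH] x hx.
  exists x => x'; apply: leq_trans (hB x') _; by rewrite -subn_eq0 -leqn0.
case: (classic (exists x', (h x < h x')%N)) => [[x' hx']|nx].
  apply: (IH x'); have := hB x'; lia.
exists x => x'; rewrite leqNgt; apply/negP => hlt; apply: nx; by exists x'.
Qed.

Lemma main_all :
  exists C : (T -> k) -> Prop,
    irreducible_component Xv C /\ left_general C /\
    forall C' : (T -> k) -> Prop,
      irreducible_component Xv C' -> left_general C' ->
      forall x, C' x <-> C x.
Proof.
have [phi0 hmax] := ex_max_rank.
set A0 := Lmx phi0 in hmax.
pose r0 := \rank A0.
pose P : 'M[k]_(r0, m) := pid_mx r0 *m invmx (col_ebase A0).
pose Q : 'M[k]_(N, r0) := invmx (row_ebase A0) *m pid_mx r0.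
apply: (@main_param r0 P Q phi0 hmax).
have -> : P *m Lmx phi0 *m Q = 1%:M.
  rewrite -/A0 /P /Q -{2}(mulmx_ebase A0) !mulmxA mulmxKV ?col_ebase_unit //.
  rewrite mulmxK ?row_ebase_unit // !mul_pid_mx.
  rewrite (_ : minn _ _ = r0) ?pid_mx_1 //.
  by have := rank_leq_col A0; have := rank_leq_row A0; rewrite /r0; lia.
by rewrite det1 oner_neq0.
Qed.
End Main.


Theorem lemma3p1 (k : closedFieldType) (u v w : nat) (f : multiplication k u v w)
    (a b c : nat) :
  exists C : (rep_index u v w a b c -> k) -> Prop,
    irreducible_component (@rep_variety k u v w a b c f) C /\ left_general C /\
    forall C' : (rep_index u v w a b c -> k) -> Prop,
      irreducible_component (@rep_variety k u v w a b c f) C' -> left_general C' ->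
      forall x, C' x <-> C x.
Proof. exact: (@main_all k u v w f a b c). Qed.
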